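(* Let $(A,\Delta,\Delta')$ be a commutative Hopf brace over a field $k$, with antipodes $S$ (for $\Delta$) and $T$ (for $\Delta'$), and write $A_{\Delta'}$ for the Hopf algebra $(A,m,1,\Delta',\epsilon,T)$. Then: (1) $A$ is a left $A_{\Delta'}$-comodule algebra via $\rho(a)=a_{(-1)}\otimes a_{(0)}:=S(a_1)a_{21'}\otimes a_{22'}$; (2) $A$ is a right $A_{\Delta'}$-comodule algebra via $$\varphi(a)=a_{[0]}\otimes a_{[1]}:=T(a_{1'})_{(-1)}a_{2'}\otimes T(a_{1'})_{(0)}a_{3'}=S(T(a_{1'})_1)\,T(a_{1'})_{21'}\,a_{2'}\otimes T(a_{1'})_{22'}\,a_{3'};$$ (3) $(\mathrm{id}\otimes S)\rho(a)=\rho(S(a))$ for all $a\in A$, i.e. $a_{(-1)}\otimes S(a_{(0)})=S(a)_{(-1)}\otimes S(a)_{(0)}$.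
   Context: All objects are over a field $k$. A Hopf brace $(A,\Delta,\Delta')$ consists of an algebra $(A,m,1)$ with two Hopf algebra structures $(A,m,1,\Delta,\varepsilon,S)$ and $(A,m,1,\Delta',\epsilon,T)$ on the same algebra such that for all $h\in A$: $h_{1'}\otimes h_{2'1}\otimes h_{2'2}=h_{11'}S(h_2)h_{31'}\otimes h_{12'}\otimes h_{32'}$. It is commutative if the algebra $A$ is commutative. Sweedler notation: $\Delta(h)=h_1\otimes h_2$, $\Delta'(h)=h_{1'}\otimes h_{2'}$, iterated $\Delta'$ written $h_{1'}\otimes h_{2'}\otimes h_{3'}$; mixed indices like $h_{21'}$ mean $\Delta'$ applied to $h_2$. A left (resp. right) comodule algebra is a comodule whose coaction is an algebra map. *)

(* Defs.v *)
(* Tensor products over a field k are encoded by formal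
   finite sums of elementary tensors (seq of pairs/triples), two formal sums
   being identified exactly when they agree under every (bi/tri)linear map
   into every k-vector space: this is the universal property defining
   A (x) A, resp. A (x) A (x) A. *)
From HB Require Import structures.
From mathcomp Require Import all_boot all_order all_algebra.
Set Implicit Arguments.
Unset Strict Implicit.
Unset Printing Implicit Defensive.
Import GRing.Theory.
Local Open Scope ring_scope.

Section Tensors.
Variables (k : fieldType) (A : algType k).

Definition tens2 := seq (A * A).
Definition tens3 := seq (A * A * A).

Definition bilinear_map (W : lmodType k) (b : A -> A -> W) : Prop :=
  (forall c (x : k) y1 y2, b (x *: y1 + y2) c = x *: b y1 c + b y2 c) /\
  (forall c (x : k) y1 y2, b c (x *: y1 + y2) = x *: b c y1 + b c y2).

Definition trilinear_map (W : lmodType k) (t : A -> A -> A -> W) : Prop :=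
  [/\ (forall c d (x : k) y1 y2, t (x *: y1 + y2) c d = x *: t y1 c d + t y2 c d),
      (forall c d (x : k) y1 y2, t c (x *: y1 + y2) d = x *: t c y1 d + t c y2 d)
    & (forall c d (x : k) y1 y2, t c d (x *: y1 + y2) = x *: t c d y1 + t c d y2)].

Definition teq2 (s t : tens2) : Prop :=
  forall (W : lmodType k) (b : A -> A -> W), bilinear_map b ->
    \sum_(p <- s) b p.1 p.2 = \sum_(p <- t) b p.1 p.2.

Definition teq3 (s t : tens3) : Prop :=
  forall (W : lmodType k) (b : A -> A -> A -> W), trilinear_map b ->
    \sum_(p <- s) b p.1.1 p.1.2 p.2 = \sum_(p <- t) b p.1.1 p.1.2 p.2.

Definition tscale (x : k) (s : tens2) : tens2 := [seq (x *: p.1, p.2) | p <- s].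
Definition tmul (s t : tens2) : tens2 :=
  [seq (p.1 * q.1, p.2 * q.2) | p <- s, q <- t].
Definition tmap (f g : A -> A) (s : tens2) : tens2 := [seq (f p.1, g p.2) | p <- s].

Definition tlinear (F : A -> tens2) : Prop :=
  forall (x : k) a b, teq2 (F (x *: a + b)) (tscale x (F a) ++ F b).

Definition compL (F : A -> tens2) (s : tens2) : tens3 :=
  flatten [seq [seq (q.1, q.2, p.2) | q <- F p.1] | p <- s].
Definition compR (F : A -> tens2) (s : tens2) : tens3 :=
  flatten [seq [seq (p.1, q.1, q.2) | q <- F p.2] | p <- s].

Record hopf_data := HopfData {
  cop : A -> tens2;
  cou : A -> k;
  ant : A -> A }.

Record is_hopf (H : hopf_data) : Prop := {
  cop_linear : tlinear (cop H);
  cou_linear : forall (x : k) a b, cou H (x *: a + b) = x * cou H a + cou H b;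
  ant_linear : forall (x : k) a b, ant H (x *: a + b) = x *: ant H a + ant H b;
  coassoc : forall h, teq3 (compL (cop H) (cop H h)) (compR (cop H) (cop H h));
  counitL : forall h, \sum_(p <- cop H h) cou H p.1 *: p.2 = h;
  counitR : forall h, \sum_(p <- cop H h) cou H p.2 *: p.1 = h;
  cop_mul : forall a b, teq2 (cop H (a * b)) (tmul (cop H a) (cop H b));
  cop_one : teq2 (cop H 1) [:: (1, 1)];
  cou_mul : forall a b, cou H (a * b) = cou H a * cou H b;
  cou_one : cou H 1 = 1;
  antipodeL : forall h, \sum_(p <- cop H h) ant H p.1 * p.2 = cou H h *: 1;
  antipodeR : forall h, \sum_(p <- cop H h) p.1 * ant H p.2 = cou H h *: 1 }.

Definition delta3 (D : A -> tens2) (h : A) : tens3 := compL D (D h).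

(* Hopf brace (A, Delta, Delta'): H = (Delta, eps, S), H' = (Delta', eps', T) *)
Definition brace_compat (H H' : hopf_data) : Prop :=
  forall h,
    teq3 (compR (cop H) (cop H' h))
         (flatten [seq [seq (u.1 * ant H t.1.2 * v.1, u.2, v.2)
                           | u <- cop H' t.1.1, v <- cop H' t.2]
                  | t <- delta3 (cop H) h]).

Record hopf_brace (H H' : hopf_data) : Prop := {
  hb_hopf : is_hopf H;
  hb_hopf' : is_hopf H';
  hb_compat : brace_compat H H' }.

Definition left_comodule_algebra (H : hopf_data) (rho : A -> tens2) : Prop :=
  [/\ tlinear rho,
      (forall a, teq3 (compL (cop H) (rho a)) (compR rho (rho a))),
      (forall a, \sum_(p <- rho a) cou H p.1 *: p.2 = a),
      (forall a b, teq2 (rho (a * b)) (tmul (rho a) (rho b)))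
    & teq2 (rho 1) [:: (1, 1)]].

Definition right_comodule_algebra (H : hopf_data) (phi : A -> tens2) : Prop :=
  [/\ tlinear phi,
      (forall a, teq3 (compL phi (phi a)) (compR (cop H) (phi a))),
      (forall a, \sum_(p <- phi a) cou H p.2 *: p.1 = a),
      (forall a b, teq2 (phi (a * b)) (tmul (phi a) (phi b)))
    & teq2 (phi 1) [:: (1, 1)]].

Definition brace_rho (H H' : hopf_data) (a : A) : tens2 :=
  flatten [seq [seq (ant H p.1 * q.1, q.2) | q <- cop H' p.2] | p <- cop H a].

Definition brace_phi (H H' : hopf_data) (a : A) : tens2 :=
  flatten [seq [seq (r.1 * t.1.2, r.2 * t.2) | r <- brace_rho H H' (ant H' t.1.1)]
          | t <- delta3 (cop H') a].

End Tensors.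

(* Main.v *)
Require Import Defs.
From HB Require Import structures.
From mathcomp Require Import all_boot all_order all_algebra.
From mathcomp Require Import ring.
Import GRing.Theory.
Local Open Scope ring_scope.

Set Implicit Arguments.
Unset Strict Implicit.
Unset Printing Implicit Defensive.

Section Inf.
Variables (k : fieldType) (A : comAlgType k).

Definition lin (W : lmodType k) (f : A -> W) :=
  forall (x : k) y z, f (x *: y + z) = x *: f y + f z.

Section LinBasic.
Variables (W : lmodType k) (f : A -> W) (hf : lin f).
Lemma lin0 : f 0 = 0.
Proof. have h := hf 1 0 0; rewrite !scale1r addr0 in h.
by apply: (@addrI _ (f 0)); rewrite addr0 -h. Qed.
Lemma linD y z : f (y + z) = f y + f z.
Proof. by have := hf 1 y z; rewrite !scale1r. Qed.
Lemma linZ x y : f (x *: y) = x *: f y.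
Proof. by rewrite -[x *: y]addr0 hf lin0 addr0. Qed.
Lemma lin_sumE I (s : seq I) (F : I -> A) : f (\sum_(i <- s) F i) = \sum_(i <- s) f (F i).
Proof. elim: s => [|i s IH]; rewrite ?big_nil ?lin0 // !big_cons linD IH //. Qed.
End LinBasic.

Lemma lin_comp (W : lmodType k) (g : A -> W) (f : A -> A) : lin g -> lin f -> lin (fun u => g (f u)).
Proof. by move=> hg hf x y z /=; rewrite hf hg. Qed.
Lemma lin_id : lin (fun u : A => u).
Proof. by []. Qed.
Lemma lin_mull (c : A) (f : A -> A) : lin f -> lin (fun u => c * f u).
Proof. by move=> hf x y z; rewrite hf mulrDr scalerAr. Qed.
Lemma lin_mulr (c : A) (f : A -> A) : lin f -> lin (fun u => f u * c).
Proof. by move=> hf x y z; rewrite hf mulrDl scalerAl. Qed.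
Lemma lin_mullk (c : k) (f : A -> k) : @lin k^o f -> @lin k^o (fun u => c * f u).
Proof. by move=> hf x y z; rewrite hf mulrDr /GRing.scale /= mulrCA. Qed.
Lemma lin_mulrk (c : k) (f : A -> k) : @lin k^o f -> @lin k^o (fun u => f u * c).
Proof. by move=> hf x y z; rewrite hf mulrDl /GRing.scale /= mulrA. Qed.
Lemma lin_scl (W : lmodType k) (c : k) (f : A -> W) : lin f -> lin (fun u => c *: f u).
Proof. by move=> hf x y z; rewrite hf scalerDr !scalerA mulrC. Qed.
Lemma lin_scr (W : lmodType k) (f : A -> k) (w : W) : @lin k^o f -> lin (fun u => f u *: w).
Proof. by move=> hf x y z; rewrite hf scalerDl scalerA. Qed.
Lemma lin_big (W : lmodType k) I (s : seq I) (F : I -> A -> W) :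
  (forall i, lin (F i)) -> lin (fun u => \sum_(i <- s) F i u).
Proof.
move=> hF x y z; rewrite scaler_sumr -big_split /=.
by apply: eq_bigr => i _; rewrite hF.
Qed.
Lemma lin_cop (W : lmodType k) (D : A -> tens2 A) (F : A * A -> W) :
  tlinear D -> (forall y, lin (fun x => F (x, y))) -> (forall x, lin (fun y => F (x, y))) ->
  lin (fun v => \sum_(q <- D v) F q).
Proof.
move=> hD h1 h2 x y z.
have E : forall s, \sum_(q <- s) F q = \sum_(q <- s) (fun a b => F (a, b)) q.1 q.2.
  by move=> s; apply: eq_bigr => -[].
rewrite !E (hD x y z W (fun a b => F (a, b))) //.
rewrite big_cat /= big_map scaler_sumr; congr (_ + _).
by apply: eq_bigr => -[a b] _ /=; rewrite (linZ (h1 b)).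
Qed.
End Inf.

Lemma lin_ant (k : fieldType) (A : comAlgType k) (H : hopf_data A) : is_hopf H -> lin (ant H).
Proof. by case. Qed.
Lemma lin_cou (k : fieldType) (A : comAlgType k) (H : hopf_data A) : is_hopf H -> @lin k A k^o (cou H).
Proof. by case. Qed.

Ltac lin_hyp := first
  [ assumption
  | match goal with
    | h : forall _ _, lin _ |- _ => apply h
    | h : forall _, lin _ |- _ => apply h
    | h : is_hopf ?H |- lin (ant ?H) => exact (lin_ant h)
    | h : is_hopf ?H |- lin (cou ?H) => exact (lin_cou h)
    | h : is_hopf ?H |- tlinear (cop ?H) => exact (cop_linear h)
    end ].

Ltac lin_tac :=
  cbn [fst snd];
  match goal with
  | |- lin (fun u => u) => exact (@lin_id _ _)
  | |- lin (fun u => \sum_(i <- ?s) @?F u i) =>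
      refine (@lin_big _ _ _ _ s (fun i u => F u i) _); intro; lin_tac
  | |- @lin _ _ ?W (fun u => \sum_(q <- ?D (@?f u)) @?F q) =>
      refine (@lin_comp _ _ W (fun v => \sum_(q <- D v) F q) f _ _);
      [ apply lin_cop; [ lin_hyp | intro; lin_tac | intro; lin_tac ] | lin_tac ]
  | |- lin (fun u => ?c *: @?f u) => refine (@lin_scl _ _ _ c f _); lin_tac
  | |- lin (fun u => @?f u *: ?w) => refine (@lin_scr _ _ _ f w _); lin_tac
  | |- lin (fun u => ?c * @?f u) =>
      first [ refine (@lin_mull _ _ c f _) | refine (@lin_mullk _ _ c f _) ]; lin_tac
  | |- lin (fun u => @?f u * ?c) =>
      first [ refine (@lin_mulr _ _ c f _) | refine (@lin_mulrk _ _ c f _) ]; lin_tac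
  | |- @lin _ _ ?W (fun u => ?g (@?f u, ?c) ?d) =>
      refine (@lin_comp _ _ W (fun v => g (v, c) d) f _ _); [ lin_hyp | lin_tac ]
  | |- @lin _ _ ?W (fun u => ?g (?c, @?f u) ?d) =>
      refine (@lin_comp _ _ W (fun v => g (c, v) d) f _ _); [ lin_hyp | lin_tac ]
  | |- @lin _ _ ?W (fun u => ?g ?d (@?f u, ?c)) =>
      refine (@lin_comp _ _ W (fun v => g d (v, c)) f _ _); [ lin_hyp | lin_tac ]
  | |- @lin _ _ ?W (fun u => ?g ?d (?c, @?f u)) =>
      refine (@lin_comp _ _ W (fun v => g d (c, v)) f _ _); [ lin_hyp | lin_tac ]
  | |- @lin _ _ ?W (fun u => ?g (?c, @?f u)) =>
      refine (@lin_comp _ _ W (fun v => g (c, v)) f _ _); [ lin_hyp | lin_tac ]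
  | |- @lin _ _ ?W (fun u => ?g (@?f u, ?c)) =>
      refine (@lin_comp _ _ W (fun v => g (v, c)) f _ _); [ lin_hyp | lin_tac ]
  | |- @lin _ _ ?W (fun u => ?g (@?f u) ?c ?d) =>
      refine (@lin_comp _ _ W (fun v => g v c d) f _ _); [ lin_hyp | lin_tac ]
  | |- @lin _ _ ?W (fun u => ?g (@?f u) ?c) =>
      refine (@lin_comp _ _ W (fun v => g v c) f _ _); [ lin_hyp | lin_tac ]
  | |- @lin _ _ ?W (fun u => ?g (@?f u)) =>
      refine (@lin_comp _ _ W g f _ _); [ lin_hyp | lin_tac ]
  | |- lin _ => lin_hyp
  end.

Lemma bilP (k : fieldType) (A : comAlgType k) (W : lmodType k) (b : A -> A -> W) :
  (forall c, lin (fun u => b u c)) -> (forall c, lin (b c)) -> bilinear_map b.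
Proof. by move=> h1 h2; split. Qed.
Lemma triP (k : fieldType) (A : comAlgType k) (W : lmodType k) (t : A -> A -> A -> W) :
  (forall c d, lin (fun u => t u c d)) -> (forall c d, lin (fun u => t c u d)) ->
  (forall c d, lin (t c d)) -> trilinear_map t.
Proof. by move=> h1 h2 h3; split. Qed.
Ltac bil_tac := apply bilP; intros; lin_tac.
Ltac tri_tac := apply triP; intros; lin_tac.

Lemma triE (k : fieldType) (A : comAlgType k) (W : lmodType k) (t : A -> A -> A -> W) :
  trilinear_map t -> [/\ (forall c d, lin (fun u => t u c d)), (forall c d, lin (fun u => t c u d))
  & (forall c d, lin (t c d))].
Proof. by []. Qed.
Lemma bilE (k : fieldType) (A : comAlgType k) (W : lmodType k) (b : A -> A -> W) :
  bilinear_map b -> (forall c, lin (fun u => b u c)) /\ (forall c, lin (b c)).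
Proof. by []. Qed.



Ltac side := solve [ tri_tac | bil_tac | lin_tac | by move=> [? ?] [? ?] | by move=> [? ?] | by move=> [[? ?] ?] ].

Section Sw.
Variables (k : fieldType) (A : comAlgType k).

Lemma pairE (W : lmodType k) (s : seq (A * A)) (B : A * A -> W) :
  \sum_(p <- s) B p = \sum_(p <- s) (fun a b => B (a, b)) p.1 p.2.
Proof. by apply: eq_bigr => -[]. Qed.

Lemma teq2E (s t : tens2 A) (W : lmodType k) (B : A * A -> W) :
  teq2 s t -> bilinear_map (fun a b => B (a, b)) -> \sum_(p <- s) B p = \sum_(p <- t) B p.
Proof. by move=> st hB; rewrite pairE (st W _ hB) -pairE. Qed.

Lemma teq3E (s t : tens3 A) (W : lmodType k) (t3 : A -> A -> A -> W) :
  teq3 s t -> trilinear_map t3 ->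
  \sum_(p <- s) t3 p.1.1 p.1.2 p.2 = \sum_(p <- t) t3 p.1.1 p.1.2 p.2.
Proof. by move=> st ht; apply: st. Qed.

Lemma sum_compL (W : lmodType k) (F : A -> tens2 A) (s : tens2 A) (t3 : A -> A -> A -> W) :
  \sum_(p <- compL F s) t3 p.1.1 p.1.2 p.2 = \sum_(p <- s) \sum_(q <- F p.1) t3 q.1 q.2 p.2.
Proof. by rewrite big_flatten big_map; apply: eq_bigr => p _; rewrite big_map. Qed.

Lemma sum_compR (W : lmodType k) (F : A -> tens2 A) (s : tens2 A) (t3 : A -> A -> A -> W) :
  \sum_(p <- compR F s) t3 p.1.1 p.1.2 p.2 = \sum_(p <- s) \sum_(q <- F p.2) t3 p.1 q.1 q.2.
Proof. by rewrite big_flatten big_map; apply: eq_bigr => p _; rewrite big_map. Qed.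

Lemma sum_tmul (W : lmodType k) (s t : tens2 A) (B : A * A -> W) :
  \sum_(p <- tmul s t) B p = \sum_(p <- s) \sum_(q <- t) B (p.1 * q.1, p.2 * q.2).
Proof. by rewrite /tmul big_allpairs_dep. Qed.

Lemma sum_tmap (W : lmodType k) f g (s : tens2 A) (B : A * A -> W) :
  \sum_(p <- tmap f g s) B p = \sum_(p <- s) B (f p.1, g p.2).
Proof. by rewrite big_map. Qed.

Lemma sum_tscale (W : lmodType k) x (s : tens2 A) (B : A * A -> W) :
  \sum_(p <- tscale x s) B p = \sum_(p <- s) B (x *: p.1, p.2).
Proof. by rewrite big_map. Qed.

Lemma xchg (W : lmodType k) I J (r1 : seq I) (r2 : seq J) (F : I -> J -> W) :
  \sum_(i <- r1) \sum_(j <- r2) F i j = \sum_(j <- r2) \sum_(i <- r1) F i j.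
Proof. exact: exchange_big. Qed.

Lemma tlinearP (F : A -> tens2 A) :
  (forall (W : lmodType k) (B : A * A -> W), bilinear_map (fun a b => B (a, b)) ->
     forall x a b, \sum_(r <- F (x *: a + b)) B r = x *: \sum_(r <- F a) B r + \sum_(r <- F b) B r) ->
  tlinear F.
Proof.
move=> h x a b W b' hb'; have [h1 h2] := bilE hb'.
rewrite (h W (fun r => b' r.1 r.2)) // big_cat sum_tscale /=; congr (_ + _).
by rewrite scaler_sumr; apply: eq_bigr => p _; rewrite (linZ (h1 _)).
Qed.

Section Hopf.
Variables (H : hopf_data A) (hH : is_hopf H).
Local Notation D := (cop H).
Local Notation e := (cou H).
Local Notation S := (ant H).
Variable (W : lmodType k).

Lemma coasL h (B : A * A -> A * A -> W) :
  (forall p q, B p q = B (0, p.2) q) -> trilinear_map (fun a b c => B (0, c) (a, b)) ->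
  \sum_(p <- D h) \sum_(q <- D p.1) B p q = \sum_(p <- D h) \sum_(q <- D p.2) B (0, q.2) (p.1, q.1).
Proof.
move=> hB ht.
transitivity (\sum_(p <- D h) \sum_(q <- D p.1) (fun a b c => B (0, c) (a, b)) q.1 q.2 p.2).
  by apply: eq_bigr => p _; apply: eq_bigr => -[a b] _; rewrite hB.
by rewrite -(sum_compL D (D h) (fun a b c => B (0, c) (a, b))) (teq3E (coassoc hH h) ht) (sum_compR D (D h) (fun a b c => B (0, c) (a, b))).
Qed.

Lemma coasR h (B : A * A -> A * A -> W) :
  (forall p q, B p q = B (p.1, 0) q) -> trilinear_map (fun a b c => B (a, 0) (b, c)) ->
  \sum_(p <- D h) \sum_(q <- D p.2) B p q = \sum_(p <- D h) \sum_(q <- D p.1) B (q.1, 0) (q.2, p.2).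
Proof.
move=> hB ht.
transitivity (\sum_(p <- D h) \sum_(q <- D p.2) (fun a b c => B (a, 0) (b, c)) p.1 q.1 q.2).
  by apply: eq_bigr => -[a b] _; apply: eq_bigr => -[c d] _; rewrite hB.
by rewrite -(sum_compR D (D h) (fun a b c => B (a, 0) (b, c))) -(teq3E (coassoc hH h) ht) (sum_compL D (D h) (fun a b c => B (a, 0) (b, c))).
Qed.

Lemma cuL h (B : A * A -> W) :
  (forall p, B p = B (0, p.2)) -> lin (fun y => B (0, y)) ->
  \sum_(p <- D h) e p.1 *: B p = B (0, h).
Proof.
move=> hB hl; rewrite -{2}(counitL hH h) (lin_sumE hl).
by apply: eq_bigr => p _; rewrite (linZ hl) hB.
Qed.

Lemma cuR h (B : A * A -> W) :
  (forall p, B p = B (p.1, 0)) -> lin (fun y => B (y, 0)) ->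
  \sum_(p <- D h) e p.2 *: B p = B (h, 0).
Proof.
move=> hB hl; rewrite -{2}(counitR hH h) (lin_sumE hl).
by apply: eq_bigr => p _; rewrite (linZ hl) hB.
Qed.

Lemma anL h (g : A -> W) : lin g -> \sum_(p <- D h) g (S p.1 * p.2) = e h *: g 1.
Proof. by move=> hg; rewrite -(linZ hg) -(antipodeL hH h) (lin_sumE hg). Qed.

Lemma anR h (g : A -> W) : lin g -> \sum_(p <- D h) g (p.1 * S p.2) = e h *: g 1.
Proof. by move=> hg; rewrite -(linZ hg) -(antipodeR hH h) (lin_sumE hg). Qed.

Lemma copM x y (B : A * A -> W) : bilinear_map (fun a b => B (a, b)) ->
  \sum_(p <- D (x * y)) B p = \sum_(p <- D x) \sum_(q <- D y) B (p.1 * q.1, p.2 * q.2).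
Proof. by move=> hB; rewrite (teq2E (cop_mul hH x y) hB) sum_tmul. Qed.

Lemma cop1 (B : A * A -> W) : bilinear_map (fun a b => B (a, b)) ->
  \sum_(p <- D 1) B p = B (1, 1).
Proof. by move=> hB; rewrite (teq2E (cop_one hH) hB) big_cons big_nil addr0. Qed.

End Hopf.
End Sw.

Section Gen.
Variables (k : fieldType) (A : comAlgType k) (H : hopf_data A) (hH : is_hopf H).
Local Notation D := (cop H).
Local Notation e := (cou H).
Local Notation S := (ant H).

Lemma cuLk h (B : A * A -> k) :
  (forall p, B p = B (0, p.2)) -> @lin _ _ k^o (fun y => B (0, y)) ->
  \sum_(p <- D h) e p.1 * B p = B (0, h).
Proof. exact: (@cuL _ _ _ hH k^o). Qed.
Lemma cuRk h (B : A * A -> k) :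
  (forall p, B p = B (p.1, 0)) -> @lin _ _ k^o (fun y => B (y, 0)) ->
  \sum_(p <- D h) e p.2 * B p = B (h, 0).
Proof. exact: (@cuR _ _ _ hH k^o). Qed.

Lemma ant1 : S 1 = 1.
Proof.
have := antipodeL hH 1; rewrite (cop1 hH (B := fun p => S p.1 * p.2)); last by side.
by rewrite mulr1 cou_one // scale1r.
Qed.
Lemma couZ x a : e (x *: a) = x * e a.
Proof. exact: (linZ (lin_cou hH)). Qed.
Lemma couS I (r : seq I) (F : I -> A) : e (\sum_(i <- r) F i) = \sum_(i <- r) e (F i).
Proof. exact: (lin_sumE (lin_cou hH)). Qed.
End Gen.

Section Brace.
Variables (k : fieldType) (A : comAlgType k) (H H' : hopf_data A) (hb : hopf_brace H H').
Let hH := hb_hopf hb.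
Let hH' := hb_hopf' hb.
Local Notation D := (cop H).
Local Notation e := (cou H).
Local Notation S := (ant H).
Local Notation D' := (cop H').
Local Notation e' := (cou H').
Local Notation T := (ant H').

Lemma compatR (W : lmodType k) h (t3 : A -> A -> A -> W) : trilinear_map t3 ->
  \sum_(p <- D' h) \sum_(q <- D p.2) t3 p.1 q.1 q.2 =
  \sum_(p <- D h) \sum_(q <- D p.1) \sum_(u <- D' q.1) \sum_(v <- D' p.2) t3 (u.1 * S q.2 * v.1) u.2 v.2.
Proof.
move=> ht; rewrite -(sum_compR D (D' h) t3) (teq3E (hb_compat hb h) ht).
rewrite big_flatten big_map /delta3 big_flatten big_map; apply: eq_bigr => p _.
rewrite big_map; apply: eq_bigr => q _.
by rewrite big_allpairs_dep.
Qed.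

Lemma compatL (W : lmodType k) h (B : A * A -> A * A -> W) :
  (forall p q, B p q = B (p.1, 0) q) -> trilinear_map (fun a b c => B (a, 0) (b, c)) ->
  \sum_(p <- D' h) \sum_(q <- D p.2) B p q =
  \sum_(p <- D h) \sum_(q <- D p.1) \sum_(u <- D' q.1) \sum_(v <- D' p.2) B (u.1 * S q.2 * v.1, 0) (u.2, v.2).
Proof.
move=> hB ht; rewrite -(compatR h ht).
by apply: eq_bigr => p _; apply: eq_bigr => -[a b] _; rewrite hB.
Qed.

Lemma cou_antE h : e' (S h) = e h.
Proof.
pose t3 := fun x y z => e' x * (e y * e z) : k^o.
have ht : trilinear_map t3 by rewrite /t3; tri_tac.
have E : \sum_(p <- D' h) \sum_(q <- D p.2) e' p.1 * (e q.1 * e q.2) =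
  \sum_(p <- D h) \sum_(q <- D p.1) \sum_(u <- D' q.1) \sum_(v <- D' p.2)
     e' (u.1 * S q.2 * v.1) * (e u.2 * e v.2) := compatR h ht.
move: E.
under eq_bigr => p _ do [rewrite -big_distrr (cuLk hH _ (B := fun q => e q.2)) /=; [|side..]].
rewrite (cuLk hH' _ (B := fun p => e p.2)) /=; [|side..].
under eq_bigr => p _ do under eq_bigr => q _ do under eq_bigr => u _ do
  [rewrite (eq_bigr (fun v => (e' u.1 * e' (S q.2) * e u.2) * (e' v.1 * e v.2))); last first;
     [by move=> v _; rewrite !cou_mul //; ring
     | rewrite -big_distrr (cuLk hH' _ (B := fun v => e v.2)) /=; [|side..]]].
under eq_bigr => p _ do under eq_bigr => q _ do
  [rewrite (eq_bigr (fun u => e' u.1 * (e u.2 * (e' (S q.2) * e p.2)))); last (by move=> u _; ring);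
   rewrite (cuLk hH' _ (B := fun u => e u.2 * (e' (S q.2) * e p.2))) /=; [|side..]].
under eq_bigr => p _ do [rewrite (cuLk hH _ (B := fun q => e' (S q.2) * e p.2)) /=; [|side..]].
rewrite (eq_bigr (fun p => e p.2 * e' (S p.1))); last (by move=> p _; ring).
by rewrite (cuRk hH _ (B := fun p => e' (S p.1))) /=; [move=> ->|side..].
Qed.
Lemma cou_eq h : e h = e' h.
Proof.
have := congr1 e' (antipodeL hH h); rewrite couZ // cou_one // mulr1 couS //.
under eq_bigr => p _ do rewrite cou_mul // cou_antE.
by rewrite (cuLk hH _ (B := fun p => e' p.2)) /=; [move=> ->|side..].
Qed.
End Brace.

Section Gen2.
Variables (k : fieldType) (A : comAlgType k) (H : hopf_data A) (hH : is_hopf H).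
Local Notation D := (cop H).
Local Notation e := (cou H).
Local Notation S := (ant H).

Lemma scalerMC (W : lmodType k) (x y : k) (v : W) : (x * y) *: v = y *: (x *: v).
Proof. by rewrite mulrC scalerA. Qed.

Lemma scalerC2 (W : lmodType k) (x y : k) (v : W) : x *: (y *: v) = y *: (x *: v).
Proof. by rewrite !scalerA mulrC. Qed.

Lemma antM a b : S (a * b) = S a * S b.
Proof.
pose M := \sum_(p <- D a) \sum_(q <- D b) \sum_(r <- D p.2) \sum_(s <- D q.2)
            S (p.1 * q.1) * (r.1 * S r.2) * (s.1 * S s.2).
have E1 : M = S (a * b).
  rewrite /M.
  under eq_bigr => p _ do under eq_bigr => q _ do
    [rewrite (anR hH _ (g := fun z => \sum_(s <- D q.2) S (p.1 * q.1) * z * (s.1 * S s.2))); [|side..];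
     rewrite (anR hH _ (g := fun z => S (p.1 * q.1) * 1 * z)); [|side..];
     rewrite !mulr1 scalerC2].
  under eq_bigr => p _ do [rewrite (cuR hH _ (B := fun q => e p.2 *: S (p.1 * q.1))) /=; [|side..]].
  by rewrite (cuR hH _ (B := fun p => S (p.1 * b))) /=; [|side..].
rewrite -E1 /M; clear E1 M.
under eq_bigr => p _ do rewrite xchg.
rewrite coasR //=; [|side..].
under eq_bigr => p _ do under eq_bigr => r _ do [rewrite coasR //=; [|side..]].
under eq_bigr => p _ do rewrite xchg.
under eq_bigr => p _ do under eq_bigr => q _ do
  [rewrite (eq_bigr (fun r => \sum_(s <- D q.1) S (r.1 * s.1) * (r.2 * s.2) * (S p.2 * S q.2)));
     last (by move=> r _; apply: eq_bigr => s _; ring);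
   rewrite -(copM hH _ _ (B := fun w => S w.1 * w.2 * (S p.2 * S q.2))); [|side..];
   rewrite (anL hH _ (g := fun z => z * (S p.2 * S q.2))); [|side..];
   rewrite cou_mul // scalerMC].
under eq_bigr => p _ do [rewrite (cuL hH _ (B := fun q => e p.1 *: (1 * (S p.2 * S q.2)))) /=; [|side..]].
by rewrite (cuL hH _ (B := fun p => 1 * (S p.2 * S b))) /= ?mul1r; [|side..].
Qed.
Lemma cou_ant h : e (S h) = e h.
Proof.
have E := congr1 e (antipodeL hH h); rewrite couZ // cou_one // mulr1 couS // in E.
rewrite -E -{1}(counitR hH h) (lin_sumE (lin_ant hH)) couS //.
apply: eq_bigr => p _; rewrite (linZ (lin_ant hH)) couZ // cou_mul //; exact: mulrC.
Qed.

Lemma antK h : S (S h) = h.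
Proof.
transitivity (\sum_(p <- D h) \sum_(q <- D p.2) S (S p.1) * (S q.1 * q.2)).
  under eq_bigr => p _ do rewrite -big_distrr /= (antipodeL hH) -scalerAr mulr1.
  by rewrite (cuR hH _ (B := fun p => S (S p.1))) /=; [|side..].
rewrite coasR //=; [|side..].
under eq_bigr => p _ do under eq_bigr => q _ do rewrite mulrA -antM.
under eq_bigr => p _ do [rewrite (anL hH _ (g := fun z => S z * p.2)) /=; [|side..]].
rewrite ant1 //; under eq_bigr => p _ do rewrite mul1r.
by rewrite (cuL hH _ (B := fun p => p.2)) /=; [|side..].
Qed.
Lemma Rinv (W : lmodType k) x (G : A * A -> W) : bilinear_map (fun a b => G (a, b)) ->
  \sum_(q <- D x) \sum_(s <- D q.1) \sum_(r <- D q.2) G (S s.2 * r.1, S s.1 * r.2) = e x *: G (1, 1).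
Proof.
move=> hG; have [hG1 hG2] := bilE hG.
rewrite coasL //=; [|side..].
under eq_bigr => q _ do [rewrite coasR //=; [|side..]].
under eq_bigr => q _ do under eq_bigr => s _ do
  [rewrite (anL hH _ (g := fun z => G (z, S q.1 * s.2))) /=; [|side..]].
under eq_bigr => q _ do [rewrite (cuL hH _ (B := fun s => G (1, S q.1 * s.2))) /=; [|side..]].
by rewrite (anL hH _ (g := fun z => G (1, z))) /=; [|side..].
Qed.

Lemma copS (W : lmodType k) h (B : A * A -> W) : bilinear_map (fun a b => B (a, b)) ->
  \sum_(w <- D (S h)) B w = \sum_(p <- D h) B (S p.2, S p.1).
Proof.
move=> hB; have [hB1 hB2] := bilE hB.
transitivity (\sum_(p <- D h) e p.1 *: \sum_(w <- D (S p.2)) B w).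
  by rewrite (cuL hH _ (B := fun p => \sum_(w <- D (S p.2)) B w)) /=; [|side..].
transitivity (\sum_(p <- D h) \sum_(w <- D (S p.2)) \sum_(q <- D p.1) \sum_(s <- D q.1)
   \sum_(r <- D q.2) B (S s.2 * r.1 * w.1, S s.1 * r.2 * w.2)).
  apply: eq_bigr => p _; rewrite scaler_sumr; apply: eq_bigr => -[w1 w2] _.
  rewrite (Rinv _ (G := fun z => B (z.1 * w1, z.2 * w2))) /= ?mul1r //; side.
under eq_bigr => p _ do rewrite xchg.
under eq_bigr => p _ do under eq_bigr => q _ do rewrite xchg.
under eq_bigr => p _ do under eq_bigr => q _ do under eq_bigr => s _ do rewrite xchg.
rewrite coasL //=; [|side..].
under eq_bigr => p _ do rewrite xchg.
under eq_bigr => p _ do under eq_bigr => s _ do under eq_bigr => q _ do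
  under eq_bigr => r _ do under eq_bigr => w _ do rewrite -!mulrA.
under eq_bigr => p _ do under eq_bigr => s _ do under eq_bigr => q _ do
  [rewrite -(copM hH _ _ (B := fun z => B (S s.2 * z.1, S s.1 * z.2))); [|side..]].
under eq_bigr => p _ do under eq_bigr => s _ do
  [rewrite (anR hH _ (g := fun y => \sum_(z <- D y) B (S s.2 * z.1, S s.1 * z.2))) /=; [|side..];
   rewrite (cop1 hH (B := fun z => B (S s.2 * z.1, S s.1 * z.2))) /=; [|side..]].
under eq_bigr => p _ do under eq_bigr => s _ do rewrite !mulr1.
under eq_bigr => p _ do rewrite -scaler_sumr.
by rewrite (cuR hH _ (B := fun p => \sum_(s <- D p.1) B (S s.2, S s.1))) /=; [|side..].
Qed.
End Gen2.

Section Rho.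
Variables (k : fieldType) (A : comAlgType k) (H H' : hopf_data A) (hb : hopf_brace H H').
Let hH := hb_hopf hb.
Let hH' := hb_hopf' hb.
Local Notation D := (cop H).
Local Notation e := (cou H).
Local Notation S := (ant H).
Local Notation D' := (cop H').
Local Notation e' := (cou H').
Local Notation T := (ant H').

Lemma Xinv (W : lmodType k) x (G : A * A -> W) : bilinear_map (fun a b => G (a, b)) ->
  \sum_(p <- D x) \sum_(w <- D' p.1) \sum_(f <- D p.2) \sum_(g <- D f.1) \sum_(i <- D' g.2)
     G (w.1 * (S g.1 * i.1 * S f.2), w.2 * S i.2) = e x *: G (1, 1).
Proof.
move=> hG; have [hG1 hG2] := bilE hG.
under eq_bigr => p _ do rewrite xchg.
rewrite coasR //=; [|side..].
under eq_bigr => p _ do under eq_bigr => f _ do rewrite xchg.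
under eq_bigr => p _ do [rewrite coasR //=; [|side..]].
under eq_bigr => p _ do under eq_bigr => f _ do under eq_bigr => g _ do under eq_bigr => w _ do
  under eq_bigr => i _ do rewrite (_ : w.1 * (S g.2 * i.1 * S p.2) = w.1 * S g.2 * i.1 * S p.2) ?mulrA //.
under eq_bigr => p _ do [rewrite -(compatR hb _ (t3 := fun a b c => G (a * S p.2, b * S c))); [|side..]].
under eq_bigr => p _ do under eq_bigr => m _ do
  [rewrite (anR hH _ (g := fun z => G (m.1 * S p.2, z))) /=; [|side..]].
under eq_bigr => p _ do under eq_bigr => m _ do rewrite (cou_eq hb).
under eq_bigr => p _ do [rewrite (cuR hH' _ (B := fun m => G (m.1 * S p.2, 1))) /=; [|side..]].
by rewrite (anR hH _ (g := fun z => G (z, 1))) /=; [|side..].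
Qed.
Lemma copSb (W : lmodType k) h (B : A * A -> W) : bilinear_map (fun a b => B (a, b)) ->
  \sum_(w <- D' (S h)) B w =
  \sum_(f <- D h) \sum_(g <- D f.1) \sum_(i <- D' g.2) B (S g.1 * i.1 * S f.2, S i.2).
Proof.
move=> hB; have [hB1 hB2] := bilE hB.
transitivity (\sum_(p <- D h) e p.2 *: \sum_(w <- D' (S p.1)) B w).
  by rewrite (cuR hH _ (B := fun p => \sum_(w <- D' (S p.1)) B w)) /=; [|side..].
transitivity (\sum_(p <- D h) \sum_(w <- D' (S p.1)) \sum_(q <- D p.2) \sum_(v <- D' q.1)
   \sum_(f <- D q.2) \sum_(g <- D f.1) \sum_(i <- D' g.2)
     B (w.1 * (v.1 * (S g.1 * i.1 * S f.2)), w.2 * (v.2 * S i.2))).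
  apply: eq_bigr => p _; rewrite scaler_sumr; apply: eq_bigr => -[w1 w2] _.
  rewrite (Xinv _ (G := fun z => B (w1 * z.1, w2 * z.2))) /= ?mulr1 //; side.
under eq_bigr => p _ do rewrite xchg.
rewrite coasR //=; [|side..].
under eq_bigr => p _ do under eq_bigr => q _ do under eq_bigr => w _ do under eq_bigr => v _ do
  under eq_bigr => f _ do under eq_bigr => g _ do under eq_bigr => i _ do rewrite !mulrA.
under eq_bigr => p _ do under eq_bigr => q _ do
  [rewrite -(copM hH' _ _ (B := fun z => \sum_(f <- D p.2) \sum_(g <- D f.1) \sum_(i <- D' g.2)
       B (z.1 * S g.1 * i.1 * S f.2, z.2 * S i.2))); [|side..]].
under eq_bigr => p _ do
  [rewrite (anL hH _ (g := fun y => \sum_(z <- D' y) \sum_(f <- D p.2) \sum_(g <- D f.1) \sum_(i <- D' g.2)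
       B (z.1 * S g.1 * i.1 * S f.2, z.2 * S i.2))) /=; [|side..];
   rewrite (cop1 hH' (B := fun z => \sum_(f <- D p.2) \sum_(g <- D f.1) \sum_(i <- D' g.2)
       B (z.1 * S g.1 * i.1 * S f.2, z.2 * S i.2))) /=; [|side..]].
under eq_bigr => p _ do under eq_bigr => f _ do under eq_bigr => g _ do under eq_bigr => i _ do
  rewrite !mul1r.
by rewrite (cuL hH _ (B := fun p => \sum_(f <- D p.2) \sum_(g <- D f.1) \sum_(i <- D' g.2)
       B (S g.1 * i.1 * S f.2, S i.2))) /=; [|side..].
Qed.
End Rho.

Section Rho2.
Variables (k : fieldType) (A : comAlgType k) (H H' : hopf_data A) (hb : hopf_brace H H').
Let hH := hb_hopf hb.
Let hH' := hb_hopf' hb.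
Local Notation D := (cop H).
Local Notation e := (cou H).
Local Notation S := (ant H).
Local Notation D' := (cop H').
Local Notation e' := (cou H').
Local Notation T := (ant H').
Local Notation rho := (brace_rho H H').

Lemma sum_rho (W : lmodType k) a (B : A * A -> W) :
  \sum_(r <- rho a) B r = \sum_(p <- D a) \sum_(q <- D' p.2) B (S p.1 * q.1, q.2).
Proof. by rewrite big_flatten big_map; apply: eq_bigr => p _; rewrite big_map. Qed.

Lemma rho_coas a : teq3 (compL D' (rho a)) (compR rho (rho a)).
Proof.
move=> W t ht; have [ht1 ht2 ht3] := triE ht.
rewrite sum_compL sum_compR.
rewrite (sum_rho _ (fun r => \sum_(w <- D' r.1) t w.1 w.2 r.2)).
rewrite (sum_rho _ (fun r => \sum_(w <- rho r.2) t r.1 w.1 w.2)) /=.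
under [in RHS]eq_bigr => p _ do under eq_bigr => q _ do rewrite sum_rho.
under eq_bigr => p _ do under eq_bigr => q _ do [rewrite (copM hH'); [|side..]].
under eq_bigr => p _ do under eq_bigr => q _ do [rewrite (copSb hb); [|side..]].
under eq_bigr => p _ do rewrite xchg.
under eq_bigr => p _ do under eq_bigr => f _ do rewrite xchg.
under eq_bigr => p _ do under eq_bigr => f _ do under eq_bigr => g _ do rewrite xchg.
under eq_bigr => p _ do under eq_bigr => f _ do under eq_bigr => g _ do under eq_bigr => i _ do
  [rewrite (coasL hH') //=; [|side..]].
symmetry.
under eq_bigr => p _ do [rewrite (compatL hb) //=; [|side..]].
under eq_bigr => p _ do [rewrite (coasL hH) //=; [|side..]].
rewrite (coasR hH) //=; [|side..].
under eq_bigr => p _ do rewrite xchg.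
rewrite (coasR hH) //=; [|side..].
do 6 (apply: eq_bigr => ? _); congr (t _ _ _); ring.
Qed.
Lemma rho_lin : tlinear rho.
Proof.
apply: tlinearP => W B hB x a b; have [hB1 hB2] := bilE hB.
rewrite !sum_rho.
have L : lin (fun v => \sum_(p <- D v) \sum_(q <- D' p.2) B (S p.1 * q.1, q.2)) by lin_tac.
exact: L.
Qed.

Lemma rho_cou a : \sum_(r <- rho a) e' r.1 *: r.2 = a.
Proof.
rewrite (sum_rho _ (fun r => e' r.1 *: r.2)) /=.
under eq_bigr => p _ do under eq_bigr => q _ do rewrite cou_mul // -scalerA.
under eq_bigr => p _ do rewrite -scaler_sumr (counitL hH') (cou_antE hb).
exact: (counitL hH a).
Qed.

Lemma rho_one : teq2 (rho 1) [:: (1, 1)].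
Proof.
move=> W b hb0; have [hb1 hb2] := bilE hb0.
rewrite big_cons big_nil addr0 (sum_rho _ (fun r => b r.1 r.2)) /=.
rewrite (cop1 hH (B := fun p => \sum_(q <- D' p.2) b (S p.1 * q.1) q.2)) /=; [|side..].
rewrite (cop1 hH' (B := fun q => b (S 1 * q.1) q.2)) /=; [|side..].
by rewrite ant1 // mulr1.
Qed.

Lemma rho_mul a b : teq2 (rho (a * b)) (tmul (rho a) (rho b)).
Proof.
move=> W b' hb0; have [hb1 hb2] := bilE hb0.
rewrite (sum_rho _ (fun r => b' r.1 r.2)) (sum_tmul _ _ (fun r => b' r.1 r.2)) /=.
rewrite (sum_rho _ (fun r => \sum_(q <- rho b) b' (r.1 * q.1) (r.2 * q.2))) /=.
under [in RHS]eq_bigr => p _ do under eq_bigr => q _ do rewrite sum_rho.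
rewrite (copM hH) /=; [|side..].
under eq_bigr => p _ do under eq_bigr => p' _ do [rewrite (copM hH'); [|side..]].
under [in RHS]eq_bigr => p _ do rewrite xchg.
by do 4 (apply: eq_bigr => ? _); rewrite /= antM // mulrACA.
Qed.
Lemma rho_ant a : teq2 (tmap id S (rho a)) (rho (S a)).
Proof.
move=> W b hb0; have [hb1 hb2] := bilE hb0.
rewrite (sum_tmap _ _ _ (fun r => b r.1 r.2)) /= (sum_rho _ (fun r => b r.1 (S r.2))).
rewrite (sum_rho _ (fun r => b r.1 r.2)) /=.
rewrite (copS hH _ (B := fun p => \sum_(q <- D' p.2) b (S p.1 * q.1) q.2)) /=; [|side..].
under [in RHS]eq_bigr => p _ do rewrite antK //.
under [in RHS]eq_bigr => p _ do [rewrite (copSb hb); [|side..]].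
rewrite [in RHS](coasL hH) //=; [|side..].
under [in RHS]eq_bigr => p _ do rewrite xchg.
under [in RHS]eq_bigr => p _ do under eq_bigr => g _ do rewrite xchg.
under [in RHS]eq_bigr => p _ do under eq_bigr => g _ do under eq_bigr => i _ do
  [rewrite (eq_bigr (fun f => b (S g.1 * i.1 * (S f.1 * f.2)) (S i.2))); last (by move=> f _; congr (b _ _); ring);
   rewrite (anL hH _ (g := fun z => b (S g.1 * i.1 * z) (S i.2))) /=; [|side..]].
under [in RHS]eq_bigr => p _ do under eq_bigr => g _ do under eq_bigr => i _ do rewrite mulr1.
under [in RHS]eq_bigr => p _ do under eq_bigr => g _ do rewrite -scaler_sumr.
under [in RHS]eq_bigr => p _ do rewrite -scaler_sumr.
by rewrite (cuR hH _ (B := fun p => \sum_(g <- D p.1) \sum_(i <- D' g.2) b (S g.1 * i.1) (S i.2))) /=; [|side..].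
Qed.
End Rho2.

Section Phi.
Variables (k : fieldType) (A : comAlgType k) (H H' : hopf_data A) (hb : hopf_brace H H').
Let hH := hb_hopf hb.
Let hH' := hb_hopf' hb.
Let hrho := rho_lin hb.
Local Notation D := (cop H).
Local Notation e := (cou H).
Local Notation S := (ant H).
Local Notation D' := (cop H').
Local Notation e' := (cou H').
Local Notation T := (ant H').
Local Notation rho := (brace_rho H H').
Local Notation phi := (brace_phi H H').

Lemma rho_coasE (W : lmodType k) z (B : A * A -> A * A -> W) :
  (forall p q, B p q = B (0, p.2) q) -> trilinear_map (fun a b c => B (0, c) (a, b)) ->
  \sum_(r <- rho z) \sum_(w <- D' r.1) B r w = \sum_(r <- rho z) \sum_(w <- rho r.2) B (0, w.2) (r.1, w.1).
Proof.
move=> hB ht.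
transitivity (\sum_(r <- rho z) \sum_(w <- D' r.1) (fun a b c => B (0, c) (a, b)) w.1 w.2 r.2).
  by apply: eq_bigr => r _; apply: eq_bigr => -[a b] _; rewrite hB.
by rewrite -(sum_compL D' (rho z) (fun a b c => B (0, c) (a, b))) (teq3E (rho_coas hb z) ht)
  (sum_compR rho (rho z) (fun a b c => B (0, c) (a, b))).
Qed.

Lemma rho_coasE' (W : lmodType k) z (B : A * A -> A * A -> W) :
  (forall p q, B p q = B (p.1, 0) q) -> trilinear_map (fun a b c => B (a, 0) (b, c)) ->
  \sum_(r <- rho z) \sum_(w <- rho r.2) B r w = \sum_(r <- rho z) \sum_(w <- D' r.1) B (w.1, 0) (w.2, r.2).
Proof.
move=> hB ht.
transitivity (\sum_(r <- rho z) \sum_(w <- rho r.2) (fun a b c => B (a, 0) (b, c)) r.1 w.1 w.2).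
  by apply: eq_bigr => -[a b] _; apply: eq_bigr => -[c d] _; rewrite hB.
by rewrite -(sum_compR rho (rho z) (fun a b c => B (a, 0) (b, c))) -(teq3E (rho_coas hb z) ht)
  (sum_compL D' (rho z) (fun a b c => B (a, 0) (b, c))).
Qed.

Lemma rho_mulE (W : lmodType k) x y (B : A * A -> W) : bilinear_map (fun a b => B (a, b)) ->
  \sum_(r <- rho (x * y)) B r = \sum_(r <- rho x) \sum_(s <- rho y) B (r.1 * s.1, r.2 * s.2).
Proof. by move=> hB; rewrite (teq2E (rho_mul hb x y) hB) sum_tmul. Qed.

Lemma rho1E (W : lmodType k) (B : A * A -> W) : bilinear_map (fun a b => B (a, b)) ->
  \sum_(r <- rho 1) B r = B (1, 1).
Proof. by move=> hB; rewrite (teq2E (rho_one hb) hB) big_cons big_nil addr0. Qed.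

Lemma rho_couL (W : lmodType k) v (g : A -> W) : lin g -> \sum_(r <- rho v) e' r.1 *: g r.2 = g v.
Proof.
move=> hg; rewrite -{2}(rho_cou hb v) (lin_sumE hg).
by apply: eq_bigr => r _; rewrite (linZ hg).
Qed.

Lemma rho_couR (W : lmodType k) v (g : A -> W) : lin g -> \sum_(r <- rho v) e' r.2 *: g r.1 = e v *: g 1.
Proof.
move=> hg; rewrite (sum_rho H H' _ (fun r => e' r.2 *: g r.1)) /=.
under eq_bigr => p _ do [rewrite (cuR hH' _ (B := fun q => g (S p.1 * q.1))) /=; [|side..]].
by rewrite (anL hH _ (g := g)).
Qed.

Lemma sum_phi (W : lmodType k) a (B : A * A -> W) :
  \sum_(x <- phi a) B x =
  \sum_(p <- D' a) \sum_(q <- D' p.1) \sum_(r <- rho (T q.1)) B (r.1 * q.2, r.2 * p.2).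
Proof.
rewrite big_flatten big_map /delta3 /compL big_flatten big_map; apply: eq_bigr => p _.
rewrite big_map; apply: eq_bigr => q _; by rewrite big_map.
Qed.

Lemma phi_lin : tlinear phi.
Proof.
apply: tlinearP => W B hB x a b; have [hB1 hB2] := bilE hB.
rewrite !sum_phi.
have L : lin (fun v => \sum_(p <- D' v) \sum_(q <- D' p.1) \sum_(r <- rho (T q.1))
   B (r.1 * q.2, r.2 * p.2)) by lin_tac.
exact: L.
Qed.

Lemma phi_cou a : \sum_(x <- phi a) e' x.2 *: x.1 = a.
Proof.
rewrite (sum_phi _ (fun x => e' x.2 *: x.1)) /=.
under eq_bigr => p _ do under eq_bigr => q _ do under eq_bigr => r _ do rewrite cou_mul // -scalerA.
under eq_bigr => p _ do under eq_bigr => q _ do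
  [rewrite (rho_couR _ (g := fun z => e' p.2 *: (z * q.2))) /=; [|side..]].
under eq_bigr => p _ do under eq_bigr => q _ do
  rewrite (cou_eq hb) (cou_ant hH') mul1r scalerC2.
under eq_bigr => p _ do rewrite -scaler_sumr (counitL hH').
exact: (counitR hH' a).
Qed.

Lemma phi_one : teq2 (phi 1) [:: (1, 1)].
Proof.
move=> W b hb0; have [hb1 hb2] := bilE hb0.
rewrite big_cons big_nil addr0 (sum_phi _ (fun x => b x.1 x.2)) /=.
rewrite (cop1 hH' (B := fun p => \sum_(q <- D' p.1) \sum_(r <- rho (T q.1)) b (r.1 * q.2) (r.2 * p.2))) /=;
  [|side..].
rewrite (cop1 hH' (B := fun q => \sum_(r <- rho (T q.1)) b (r.1 * q.2) (r.2 * 1))) /=; [|side..].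
rewrite ant1 //.
by rewrite (rho1E (B := fun r => b (r.1 * 1) (r.2 * 1))) /= ?mulr1; [|side..].
Qed.

Lemma phi_mulE (W : lmodType k) x y (B : A * A -> W) : bilinear_map (fun a b => B (a, b)) ->
  \sum_(r <- phi (x * y)) B r = \sum_(r <- phi x) \sum_(s <- phi y) B (r.1 * s.1, r.2 * s.2).
Proof.
move=> hB; have [hB1 hB2] := bilE hB.
rewrite sum_phi (sum_phi _ (fun r => \sum_(s <- phi y) B (r.1 * s.1, r.2 * s.2))) /=.
under [in RHS]eq_bigr => p _ do under eq_bigr => q _ do under eq_bigr => r _ do rewrite sum_phi.
rewrite (copM hH') /=; [|side..].
under eq_bigr => p _ do under eq_bigr => p' _ do [rewrite (copM hH') /=; [|side..]].
under eq_bigr => p _ do under eq_bigr => p' _ do under eq_bigr => q _ do under eq_bigr => q' _ do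
  [rewrite antM // (rho_mulE _ _ (B := fun r => B (r.1 * (q.2 * q'.2), r.2 * (p.2 * p'.2)))) /=; [|side..]].
under [in RHS]eq_bigr => p _ do under eq_bigr => q _ do rewrite xchg.
under [in RHS]eq_bigr => p _ do rewrite xchg.
under [in RHS]eq_bigr => p _ do under eq_bigr => p' _ do under eq_bigr => q _ do rewrite xchg.
by do 6 (apply: eq_bigr => ? _); congr (B (_, _)); ring.
Qed.

Lemma phi_mul a b : teq2 (phi (a * b)) (tmul (phi a) (phi b)).
Proof.
move=> W b' hb0; have [hb1 hb2] := bilE hb0.
by rewrite (phi_mulE _ _ (B := fun r => b' r.1 r.2)) ?sum_tmul //=; side.
Qed.
End Phi.

Section Phi2.
Variables (k : fieldType) (A : comAlgType k) (H H' : hopf_data A) (hb : hopf_brace H H').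
Let hH := hb_hopf hb.
Let hH' := hb_hopf' hb.
Let hrho := rho_lin hb.
Let hphi := phi_lin hb.
Local Notation D := (cop H).
Local Notation e := (cou H).
Local Notation S := (ant H).
Local Notation D' := (cop H').
Local Notation e' := (cou H').
Local Notation T := (ant H').
Local Notation rho := (brace_rho H H').
Local Notation phi := (brace_phi H H').

Lemma copR (W : lmodType k) w (B : A * A -> W) : bilinear_map (fun a b => B (a, b)) ->
  \sum_(c <- D' w) B c = \sum_(d <- D w) \sum_(s <- rho d.2) B (d.1 * s.1, s.2).
Proof.
move=> hB; have [hB1 hB2] := bilE hB.
under [in RHS]eq_bigr => d _ do rewrite (sum_rho H H' _ (fun s => B (d.1 * s.1, s.2))) /=.
rewrite [in RHS](coasR hH) //=; [|side..].
under [in RHS]eq_bigr => d _ do under eq_bigr => f _ do under eq_bigr => g _ do rewrite mulrA.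
under [in RHS]eq_bigr => d _ do
  [rewrite (anR hH _ (g := fun z => \sum_(g <- D' d.2) B (z * g.1, g.2))) /=; [|side..]].
under [in RHS]eq_bigr => d _ do under eq_bigr => g _ do rewrite mul1r.
rewrite (cuL hH _ (B := fun d => \sum_(g <- D' d.2) B (g.1, g.2))) /=; [|side..].
by apply: eq_bigr => -[].
Qed.

Lemma rhoD' (W : lmodType k) z (B : A * A -> A * A -> W) :
  (forall r w, B r w = B (r.1, 0) w) -> trilinear_map (fun a b c => B (a, 0) (b, c)) ->
  \sum_(r <- rho z) \sum_(w <- D' r.2) B r w =
  \sum_(d <- D z) \sum_(s <- rho d.1) \sum_(r <- rho d.2) \sum_(m <- rho r.2)
     B (s.1 * r.1, 0) (s.2 * m.1, m.2).
Proof.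
move=> hB ht; set t := fun a b c => B (a, 0) (b, c).
have [ht1 ht2 ht3] := triE ht.
transitivity (\sum_(r <- rho z) \sum_(w <- D' r.2) t r.1 w.1 w.2).
  by apply: eq_bigr => r _; apply: eq_bigr => -[a b] _; rewrite hB.
rewrite (sum_rho H H' _ (fun r => \sum_(w <- D' r.2) t r.1 w.1 w.2)) /=.
under eq_bigr => p _ do [rewrite (coasR hH') //=; [|side..]].
symmetry.
under eq_bigr => d _ do under eq_bigr => s _ do [rewrite (rho_coasE' hb) //=; [|side..]].
rewrite /t.
under eq_bigr => d _ do rewrite (sum_rho H H' _ (fun s => \sum_(r <- rho d.2) \sum_(w <- D' r.1)
   B (s.1 * w.1, 0) (s.2 * w.2, r.2))) /=.
under eq_bigr => d _ do under eq_bigr => f _ do under eq_bigr => g _ do rewrite sum_rho /=.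
under eq_bigr => d _ do under eq_bigr => f _ do under eq_bigr => g _ do under eq_bigr => f' _ do
  under eq_bigr => g' _ do [rewrite (copM hH') /=; [|side..]].
under eq_bigr => d _ do under eq_bigr => f _ do rewrite xchg.
rewrite (coasL hH) //=; [|side..].
under eq_bigr => d _ do [rewrite (coasR hH) //=; [|side..]].
under eq_bigr => d _ do under eq_bigr => f _ do under eq_bigr => f' _ do under eq_bigr => g _ do
  rewrite xchg.
under eq_bigr => d _ do under eq_bigr => f _ do under eq_bigr => f' _ do under eq_bigr => g _ do
  [rewrite (eq_bigr (fun m => \sum_(g' <- D' f.2) \sum_(m' <- D' g'.1)
      B (S d.1 * (g.1 * m.1) * m'.1, 0) (g.2 * m.2 * m'.2, g'.2)));
   last (by move=> m _; do 2 (apply: eq_bigr => ? _); congr (B (_, _) (_, _)); ring)].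
under eq_bigr => d _ do under eq_bigr => f _ do under eq_bigr => f' _ do
  [rewrite -(copM hH' _ _ (B := fun w => \sum_(g' <- D' f.2) \sum_(m' <- D' g'.1)
      B (S d.1 * w.1 * m'.1, 0) (w.2 * m'.2, g'.2))); [|side..]].
under eq_bigr => d _ do under eq_bigr => f _ do
  [rewrite (anR hH _ (g := fun y => \sum_(w <- D' y) \sum_(g' <- D' f.2) \sum_(m' <- D' g'.1)
      B (S d.1 * w.1 * m'.1, 0) (w.2 * m'.2, g'.2))) /=; [|side..];
   rewrite (cop1 hH' (B := fun w => \sum_(g' <- D' f.2) \sum_(m' <- D' g'.1)
      B (S d.1 * w.1 * m'.1, 0) (w.2 * m'.2, g'.2))) /=; [|side..]].
under eq_bigr => d _ do [rewrite (cuL hH _ (B := fun f => \sum_(g' <- D' f.2) \sum_(m' <- D' g'.1)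
      B (S d.1 * 1 * m'.1, 0) (1 * m'.2, g'.2))) /=; [|side..]].
by do 3 (apply: eq_bigr => ? _); rewrite mulr1 mul1r.
Qed.
Lemma phirho (W : lmodType k) z (B : A * A -> A * A -> W) :
  (forall r y, B r y = B (0, r.2) y) -> trilinear_map (fun a b c => B (0, c) (a, b)) ->
  \sum_(r <- rho z) \sum_(y <- phi r.1) B r y =
  \sum_(r <- rho z) \sum_(r' <- rho (T r.1)) \sum_(m <- rho r.2) \sum_(n <- rho m.2)
     B (0, n.2) (r'.1 * m.1, r'.2 * n.1).
Proof.
move=> hB ht; set t := fun a b c => B (0, c) (a, b).
have [ht1 ht2 ht3] := triE ht.
transitivity (\sum_(r <- rho z) \sum_(y <- phi r.1) t y.1 y.2 r.2).
  by apply: eq_bigr => -[a b] _; apply: eq_bigr => -[c d] _; rewrite hB.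
under eq_bigr => r _ do rewrite (sum_phi H H' _ (fun y => t y.1 y.2 r.2)) /=.
rewrite /t (rho_coasE hb) //=; [|side..].
under eq_bigr => r _ do rewrite xchg.
rewrite (rho_coasE hb) //=; [|side..].
under eq_bigr => r _ do under eq_bigr => m _ do rewrite xchg.
by under eq_bigr => r _ do rewrite xchg.
Qed.
Lemma star (W : lmodType k) w (t : A -> A -> A -> W) : trilinear_map t ->
  \sum_(c <- D' w) \sum_(r <- rho c.2) \sum_(y <- phi r.1) \sum_(s <- rho c.1)
     t (y.1 * s.1) (y.2 * s.2) r.2 =
  \sum_(d <- D w) \sum_(s <- rho d.1) \sum_(r <- rho d.2) \sum_(m <- rho r.2)
     t (s.1 * r.1) (s.2 * m.1) m.2.
Proof.
move=> ht; have [ht1 ht2 ht3] := triE ht.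
under eq_bigr => c _ do [rewrite phirho //=; [|side..]].
rewrite copR /=; [|side..].
under eq_bigr => d _ do under eq_bigr => s0 _ do under eq_bigr => r _ do under eq_bigr => r' _ do
  under eq_bigr => m _ do under eq_bigr => n _ do [rewrite (rho_mulE hb) /=; [|side..]].
under eq_bigr => d _ do [rewrite (rho_coasE' hb) //=; [|side..]].
under eq_bigr => d _ do under eq_bigr => s0 _ do under eq_bigr => r _ do under eq_bigr => r' _ do
  under eq_bigr => m _ do under eq_bigr => n _ do rewrite xchg.
under eq_bigr => d _ do under eq_bigr => s0 _ do under eq_bigr => r _ do under eq_bigr => r' _ do
  under eq_bigr => m _ do rewrite xchg.
under eq_bigr => d _ do under eq_bigr => s0 _ do under eq_bigr => r _ do under eq_bigr => r' _ do
  rewrite xchg.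
under eq_bigr => d _ do under eq_bigr => s0 _ do under eq_bigr => r _ do rewrite xchg.
under eq_bigr => d _ do under eq_bigr => s0 _ do under eq_bigr => r _ do under eq_bigr => s' _ do
  [rewrite (eq_bigr (fun r' => \sum_(m <- rho s0.2) \sum_(n <- rho m.2) \sum_(s <- rho d.1)
      t ((s'.1 * r'.1) * (m.1 * s.1)) ((s'.2 * r'.2) * (n.1 * s.2)) n.2));
   last (by move=> r' _; do 3 (apply: eq_bigr => ? _); congr (t _ _ _); ring)].
under eq_bigr => d _ do under eq_bigr => s0 _ do under eq_bigr => r _ do
  [rewrite -(rho_mulE hb _ _ (B := fun x => \sum_(m <- rho s0.2) \sum_(n <- rho m.2) \sum_(s <- rho d.1)
      t (x.1 * (m.1 * s.1)) (x.2 * (n.1 * s.2)) n.2)); [|side..]].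
under eq_bigr => d _ do under eq_bigr => s0 _ do
  [rewrite (anR hH' _ (g := fun y => \sum_(x <- rho y) \sum_(m <- rho s0.2) \sum_(n <- rho m.2)
      \sum_(s <- rho d.1) t (x.1 * (m.1 * s.1)) (x.2 * (n.1 * s.2)) n.2)) /=; [|side..];
   rewrite (rho1E hb (B := fun x => \sum_(m <- rho s0.2) \sum_(n <- rho m.2)
      \sum_(s <- rho d.1) t (x.1 * (m.1 * s.1)) (x.2 * (n.1 * s.2)) n.2)) /=; [|side..]].
under eq_bigr => d _ do
  [rewrite (rho_couL hb _ (g := fun v => \sum_(m <- rho v) \sum_(n <- rho m.2)
      \sum_(s <- rho d.1) t (1 * (m.1 * s.1)) (1 * (n.1 * s.2)) n.2)) /=; [|side..]].
under [in RHS]eq_bigr => d _ do rewrite xchg.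
under [in RHS]eq_bigr => d _ do under eq_bigr => r _ do rewrite xchg.
by do 4 (apply: eq_bigr => ? _); congr (t _ _ _); ring.
Qed.
Lemma phi_coas a : teq3 (compL phi (phi a)) (compR D' (phi a)).
Proof.
move=> W t ht; have [ht1 ht2 ht3] := triE ht.
rewrite sum_compL sum_compR.
rewrite (sum_phi H H' _ (fun x => \sum_(y <- phi x.1) t y.1 y.2 x.2)) /=.
under eq_bigr => p _ do under eq_bigr => q _ do under eq_bigr => r _ do
  [rewrite (phi_mulE hb) /=; [|side..]].
under eq_bigr => p _ do under eq_bigr => q _ do under eq_bigr => r _ do under eq_bigr => y _ do
  rewrite (sum_phi H H') /=.
under eq_bigr => p _ do under eq_bigr => q _ do under eq_bigr => r _ do rewrite xchg.
under eq_bigr => p _ do under eq_bigr => q _ do rewrite xchg.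
under eq_bigr => p _ do [rewrite (coasR hH') //=; [|side..]].
under eq_bigr => p _ do under eq_bigr => q _ do under eq_bigr => p2 _ do under eq_bigr => r _ do
  rewrite xchg.
under eq_bigr => p _ do under eq_bigr => q _ do under eq_bigr => p2 _ do rewrite xchg.
under eq_bigr => p _ do under eq_bigr => q _ do [rewrite (coasR hH') //=; [|side..]].
under eq_bigr => p _ do under eq_bigr => q _ do under eq_bigr => p2 _ do under eq_bigr => q2 _ do
  under eq_bigr => r _ do under eq_bigr => y _ do under eq_bigr => s _ do rewrite !mulrA.
under eq_bigr => p _ do under eq_bigr => q _ do under eq_bigr => p2 _ do
  [rewrite -(copS hH' _ (B := fun c => \sum_(r <- rho c.2) \sum_(y <- phi r.1) \sum_(s <- rho c.1)
      t (y.1 * s.1 * p2.2) (y.2 * s.2 * q.2) (r.2 * p.2))); [|side..];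
   rewrite (star _ (t := fun u v w => t (u * p2.2) (v * q.2) (w * p.2))); [|side..]].
rewrite [in RHS](sum_phi H H' _ (fun x => \sum_(w <- D' x.2) t x.1 w.1 w.2)) /=.
under [in RHS]eq_bigr => p _ do under eq_bigr => q _ do under eq_bigr => r _ do
  [rewrite (copM hH') /=; [|side..]].
under [in RHS]eq_bigr => p _ do under eq_bigr => q _ do [rewrite rhoD' //=; [|side..]].
under [in RHS]eq_bigr => p _ do under eq_bigr => q _ do under eq_bigr => d _ do under eq_bigr => s _ do
  under eq_bigr => r _ do rewrite xchg.
under [in RHS]eq_bigr => p _ do under eq_bigr => q _ do under eq_bigr => d _ do under eq_bigr => s _ do
  rewrite xchg.
under [in RHS]eq_bigr => p _ do under eq_bigr => q _ do under eq_bigr => d _ do rewrite xchg.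
under [in RHS]eq_bigr => p _ do under eq_bigr => q _ do rewrite xchg.
under [in RHS]eq_bigr => p _ do rewrite xchg.
by rewrite [in RHS](coasR hH') //=; side.
Qed.
End Phi2.


Unset Implicit Arguments.

Theorem lemma2p8 (k : fieldType) (A : comAlgType k) (H H' : hopf_data A) :
  hopf_brace H H' ->
  [/\ left_comodule_algebra H' (brace_rho H H'),
      right_comodule_algebra H' (brace_phi H H')
    & forall a : A, teq2 (tmap id (ant H) (brace_rho H H' a))
                         (brace_rho H H' (ant H a))].
Proof.
move=> hb; split.
- split.
  + exact: rho_lin hb.
  + exact: rho_coas hb.
  + exact: rho_cou hb.
  + exact: rho_mul hb.
  + exact: rho_one hb.
- split.
  + exact: phi_lin hb.
  + exact: phi_coas hb.
  + exact: phi_cou hb.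
  + exact: phi_mul hb.
  + exact: phi_one hb.
- exact: rho_ant hb.
Qed.
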